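(* Let $n\ge p$. For $\mathcal X\in\mathrm{St}(n,p,l)$ and $\mathcal V\in T_{\mathcal X}\mathrm{St}(n,p,l)$ put $\mathcal P=\mathcal I-\frac12\mathcal X*\mathcal X^\top\in\mathbb R^{n\times n\times l}$ and $\mathcal W_{\mathcal V}=\mathcal P*\mathcal V*\mathcal X^\top-\mathcal X*\mathcal V^\top*\mathcal P$ (a skew-symmetric tensor in $\mathbb R^{n\times n\times l}$). Then $$R_{\mathcal X}(\mathcal V)=\Big(\mathcal I-\tfrac12\mathcal W_{\mathcal V}\Big)^{-1}*\Big(\mathcal I+\tfrac12\mathcal W_{\mathcal V}\Big)*\mathcal X$$ is well defined and is a retraction on $\mathrm{St}(n,p,l)$.
   Context: Frontal slices $A^{(i)}=\mathcal A(:,:,i)$. The t-product is $\mathcal A*\mathcal B=\operatorname{fold}(\operatorname{bcirc}(\mathcal A)\operatorname{unfold}(\mathcal B))$, where $\operatorname{bcirc}(\mathcal A)$ is the block circulant matrix with $(i,j)$ block $A^{(((i-j)\bmod l)+1)}$, $\operatorname{unfold}$ stacks frontal slices vertically, $\operatorname{fold}$ is its inverse. Transpose: $\mathcal A^\top$ has frontal slices $(A^{(1)})^\top,(A^{(l)})^\top,\dots,(A^{(2)})^\top$. $\mathcal I$ is the identity tensor (first frontal slice identity, others zero), and $\mathcal A^{-1}$ the t-product inverse. A tensor $\mathcal W$ is skew-symmetric if $\mathcal W^\top=-\mathcal W$. $\mathrm{St}(n,p,l)=\{\mathcal X\in\mathbb R^{n\times p\times l}:\mathcal X^\top*\mathcal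 X=\mathcal I\}$, an embedded submanifold of $\mathbb R^{n\times p\times l}$. A retraction on a manifold $M$ is a smooth map $R:TM\to M$ with $R_x(0_x)=x$ and $\mathrm DR_x(0_x)=\mathrm{id}_{T_xM}$. *)

(* Defs.v *)
From HB Require Import structures.
From mathcomp Require Import all_boot all_order all_algebra.
From mathcomp Require Import all_classical all_reals all_analysis.
From Stdlib Require Import ClassicalEpsilon.

Set Implicit Arguments.
Unset Strict Implicit.
Unset Printing Implicit Defensive.

Import Order.TTheory GRing.Theory Num.Theory.
Import numFieldNormedType.Exports.
Local Open Scope ring_scope.

(* Third-order tensors in R^{n x p x l}, represented by their l frontal
   slices (0-indexed): A k = A^{(k+1)}. *)
Definition tensor (R : Type) (n p l : nat) := 'I_l -> 'M[R]_(n, p).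

Definition ord_sub l (i j : 'I_l) : 'I_l :=
  Ordinal (ltn_pmod (i + (l - j)) (leq_ltn_trans (leq0n i) (ltn_ord i))).
Definition ord_neg l (i : 'I_l) : 'I_l :=
  Ordinal (ltn_pmod (l - i) (leq_ltn_trans (leq0n i) (ltn_ord i))).

Section TAlg.
Variable R : pzRingType.

(* t-product: fold (bcirc A * unfold B); the i-th block row of bcirc A is
   [A^{(i-j) mod l}]_j, so the i-th slice of the product is
   sum_j A_{(i-j) mod l} B_j. *)
Definition tprod n p q l (A : tensor R n p l) (B : tensor R p q l)
  : tensor R n q l := fun i => \sum_(j < l) A (ord_sub i j) *m B j.

Definition ttr n p l (A : tensor R n p l) : tensor R p n l :=
  fun i => (A (ord_neg i))^T.

Definition tid n l : tensor R n n l :=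
  fun i => if val i == 0%N then 1%:M else 0.

Definition tadd n p l (A B : tensor R n p l) : tensor R n p l :=
  fun i => A i + B i.
Definition tsub n p l (A B : tensor R n p l) : tensor R n p l :=
  fun i => A i - B i.
Definition tscale n p l (a : R) (A : tensor R n p l) : tensor R n p l :=
  fun i => a *: A i.
Definition tzero n p l : tensor R n p l := fun _ => 0.
End TAlg.

Arguments tid {R n l}.
Arguments tzero {R n p l}.

Section TAnal.
Variable R : realType.

Definition tinvertible n l (A : tensor R n n l) : Prop :=
  exists B : tensor R n n l, tprod A B = tid /\ tprod B A = tid.

Definition tinv n l (A : tensor R n n l) : tensor R n n l :=
  epsilon (inhabits A) (fun B => tprod A B = tid /\ tprod B A = tid).

Definition Stiefel n p l (X : tensor R n p l) : Prop := tprod (ttr X) X = tid.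

Definition tcoord n p l (A : tensor R n p l) : 'M[R]_(l, n * p) :=
  \matrix_(k, j) mxvec (A k) 0 j.
Definition tuncoord n p l (M : 'M[R]_(l, n * p)) : tensor R n p l :=
  fun k => vec_mx (row k M).

Definition tangent n p l (X V : tensor R n p l) : Prop :=
  exists g : R -> tensor R n p l,
    (forall t, Stiefel (g t)) /\ g 0 = X /\
    is_derive (0 : R) (1 : R) (fun t => tcoord (g t)) (tcoord V).

Fixpoint Ck (V W : normedModType R) (k : nat) (f : V -> W) : Prop :=
  match k with
  | 0%N => continuous f
  | k'.+1 => (forall x, differentiable f x) /\
             forall v : V, Ck k' (fun x => 'D_v f x)
  end.
Definition smooth (V W : normedModType R) (f : V -> W) : Prop :=
  forall k, Ck k f.

Definition Pten n p l (X : tensor R n p l) : tensor R n n l :=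
  tsub tid (tscale (1/2) (tprod X (ttr X))).
Definition Wten n p l (X V : tensor R n p l) : tensor R n n l :=
  tsub (tprod (tprod (Pten X) V) (ttr X))
       (tprod (tprod X (ttr V)) (Pten X)).
Definition Retr n p l (X V : tensor R n p l) : tensor R n p l :=
  tprod (tprod (tinv (tsub tid (tscale (1/2) (Wten X V))))
               (tadd tid (tscale (1/2) (Wten X V)))) X.

Definition Retr_coord n p l (M : 'M[R]_(l + l, n * p)) : 'M[R]_(l, n * p) :=
  tcoord (Retr (tuncoord (usubmx M)) (tuncoord (dsubmx M))).
End TAnal.

(* Main.v *)
Require Import Defs.
From HB Require Import structures.
From mathcomp Require Import all_boot all_order all_algebra.
From mathcomp Require Import all_classical all_reals all_analysis.
From Stdlib Require Import ClassicalEpsilon.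
Import Order.TTheory GRing.Theory Num.Theory.
Import numFieldNormedType.Exports.
Local Open Scope ring_scope.
Set Implicit Arguments.
Unset Strict Implicit.
Unset Printing Implicit Defensive.
Section Alg.
Variable R : realType.

Definition bcirc n p l (A : tensor R n p l) :
  'M[R]_(\sum_(i < l) n, \sum_(i < l) p) :=
  @mxblock _ l l (fun _ => n) (fun _ => p) (fun i j => A (ord_sub i j)).

Lemma ord_subE l (i j : 'I_l.+1) : ord_sub i j = (i - j)%R.
Proof.
apply: val_inj => /=.
by rewrite modnDmr.
Qed.

Lemma ord_negE l (i : 'I_l.+1) : ord_neg i = (- i)%R.
Proof. by apply: val_inj. Qed.

Lemma ord_sub0 l (i : 'I_l) (j : 'I_l) : val j = 0%N -> ord_sub i j = i.
Proof.
move=> j0; apply: val_inj => /=; rewrite j0 subn0.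
by rewrite modnDr modn_small.
Qed.
End Alg.
Section Alg2.
Variable R : realType.

Lemma bcircM n p q l (A : tensor R n p l) (B : tensor R p q l) :
  bcirc (tprod A B) = bcirc A *m bcirc B.
Proof.
rewrite /bcirc mul_mxblock; apply: eq_mxblock => i k.
rewrite /tprod.
case: l A B i k => [|l] A B i k; first by case: i.
rewrite (reindex_inj (addIr (- k))) /=.
apply: eq_bigr => j _; rewrite !ord_subE.
by rewrite opprB addrA subrK.
Qed.

Lemma bcircT n p l (A : tensor R n p l) : bcirc (ttr A) = (bcirc A)^T.
Proof.
rewrite /bcirc tr_mxblock; apply: eq_mxblock => i j.
rewrite /ttr.
case: l A i j => [|l] A i j; first by case: i.
by rewrite ord_negE !ord_subE opprB.
Qed.

Lemma bcirc1 n l : bcirc (@tid R n l) = 1%:M.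
Proof.
rewrite -(mxdiagZ (p_ := fun _ : 'I_l => n)) /bcirc /mxdiag.
apply/mxblockP => i j; rewrite !mxblockK. rewrite /tid conform_mx_id.
case: l i j => [|l] i j; first by case: i.
rewrite ord_subE.
have -> : (val (i - j)%R == 0%N) = ((i - j)%R == 0%R) by [].
by rewrite subr_eq0.
Qed.

Lemma bcircD n p l (A B : tensor R n p l) : bcirc (tadd A B) = bcirc A + bcirc B.
Proof. by rewrite /bcirc -mxblockD. Qed.
Lemma bcircB n p l (A B : tensor R n p l) : bcirc (tsub A B) = bcirc A - bcirc B.
Proof. by rewrite /bcirc -mxblockB. Qed.
Lemma bcircZ n p l a (A : tensor R n p l) : bcirc (tscale a A) = a *: bcirc A.
Proof.
apply/matrixP => i j; rewrite /bcirc /mxblock /tscale !mxE.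
by [].
Qed.
Lemma bcirc0 n p l : bcirc (@tzero R n p l) = 0.
Proof. by rewrite /bcirc -mxblock0. Qed.

Lemma bcirc_inj n p l (A B : tensor R n p l) : bcirc A = bcirc B -> A = B.
Proof.
rewrite /bcirc => /eq_mxblockP H; apply: functional_extensionality_dep => i.
case: l A B i H => [|l] A B i H; first by case: i.
by have := H i ord0; rewrite !ord_sub0.
Qed.
End Alg2.
Section Alg3.
Variable R : realType.

Lemma mx_sum0 n k (M N : 'M[R]_(\sum_(i < 0) n, k)) : M = N.
Proof.
apply/matrixP => i; case: i => i Hi; exfalso; move: Hi.
by rewrite big_ord0.
Qed.

Lemma bcirc_left_inv n l (A : tensor R n n l) (B : tensor R n n l) :
  bcirc A \in unitmx -> tprod A B = tid -> bcirc B = invmx (bcirc A).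
Proof.
move=> uA /(congr1 (@bcirc R n n l)); rewrite bcircM bcirc1 => H.
by rewrite -[bcirc B](mulKmx uA) H mulmx1.
Qed.

Lemma exists_inv n l (A : tensor R n n l) :
  bcirc A \in unitmx -> exists B : tensor R n n l, bcirc B = invmx (bcirc A).
Proof.
move=> uA.
case: l A uA => [|l] A uA; first by exists tzero; apply: mx_sum0.
pose N := invmx (bcirc A).
exists (fun k => @submxblock _ _ _ (fun _ : 'I_l.+1 => n) (fun _ : 'I_l.+1 => n) N k ord0).
apply: bcirc_left_inv => //.
apply: functional_extensionality_dep => i.
rewrite /tprod.
have H := mulmxV uA; rewrite -/N -(submxblockK N) /bcirc mul_mxblock in H.
move: H => /(congr1 (fun M => @submxblock _ _ _ (fun _ : 'I_l.+1 => n) (fun _ : 'I_l.+1 => n) M i ord0)).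
rewrite mxblockK => H. rewrite H.
rewrite -(bcirc1 R n l.+1) /bcirc mxblockK ord_sub0 //.
Qed.

Lemma tinvE n l (A : tensor R n n l) :
  bcirc A \in unitmx -> bcirc (tinv A) = invmx (bcirc A).
Proof.
move=> uA; have [B HB] := exists_inv uA.
have spec : tprod A B = tid /\ tprod B A = tid.
  split; apply: bcirc_inj; rewrite bcircM bcirc1 HB.
    exact: mulmxV.
  exact: mulVmx.
have := epsilon_spec (inhabits A) (fun B => tprod A B = tid /\ tprod B A = tid)
  (ex_intro _ B spec).
rewrite -/(tinv A) => -[H1 _].
exact: bcirc_left_inv.
Qed.

Lemma tinvertibleP n l (A : tensor R n n l) :
  bcirc A \in unitmx -> tinvertible A.
Proof.
move=> uA; exists (tinv A); split; apply: bcirc_inj;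
  rewrite bcircM bcirc1 tinvE //.
  exact: mulmxV.
exact: mulVmx.
Qed.
End Alg3.
Section Alg4.
Variable R : realType.

Lemma skew_unit m (M : 'M[R]_m) (c : R) : M^T = - M -> (1%:M - c *: M) \in unitmx.
Proof.
move=> skM; rewrite unitmxE unitfE; apply/negP => /det0P [v vn0 vM].
have ev : v = c *: (v *m M).
  by apply/eqP; rewrite -subr_eq0 scalemxAr -{1}(mulmx1 v) -mulmxBr vM.
have s0 : v *m M *m v^T = 0.
  have E : (v *m M *m v^T)^T = - (v *m M *m v^T).
    by rewrite !trmx_mul trmxK skM mulNmx mulmxN mulmxA.
  apply/matrixP => i j; rewrite !ord1 [RHS]mxE.
  move/matrixP: E => /(_ 0 0); rewrite [LHS]mxE [RHS]mxE => E.
  have : (v *m M *m v^T) 0 0 *+ 2 = 0 by rewrite mulr2n {1}E addNr.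
  by move/eqP; rewrite mulrn_eq0 /= => /eqP.
have vv : v *m v^T = 0.
  by rewrite {1}ev -scalemxAl s0 scaler0.
apply/negP: vn0; rewrite negbK; apply/eqP/matrixP => i j.
rewrite ord1 mxE.
move/matrixP: vv => /(_ 0 0); rewrite !mxE => /eqP.
rewrite psumr_eq0; last by move=> k _; rewrite mxE -expr2 sqr_ge0.
move/allP => /(_ j (mem_index_enum _)); rewrite mxE -expr2 sqrf_eq0.
by move/eqP.
Qed.

Definition Pm k m (X : 'M[R]_(k, m)) : 'M[R]_k := 1%:M - (1/2) *: (X *m X^T).
Definition Wm k m (X V : 'M[R]_(k, m)) : 'M[R]_k :=
  Pm X *m V *m X^T - X *m V^T *m Pm X.

Lemma Pm_sym k m (X : 'M[R]_(k, m)) : (Pm X)^T = Pm X.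
Proof. by rewrite /Pm linearB /= trmx1 linearZ /= trmx_mul trmxK. Qed.

Lemma Wm_skew k m (X V : 'M[R]_(k, m)) : (Wm X V)^T = - Wm X V.
Proof.
rewrite /Wm linearB /= !trmx_mul !trmxK Pm_sym opprB.
by rewrite !mulmxA.
Qed.

Lemma bcircP n p l (X : tensor R n p l) : bcirc (Pten X) = Pm (bcirc X).
Proof. by rewrite /Pten bcircB bcirc1 bcircZ bcircM bcircT. Qed.

Lemma bcircW n p l (X V : tensor R n p l) :
  bcirc (Wten X V) = Wm (bcirc X) (bcirc V).
Proof. by rewrite /Wten bcircB !bcircM !bcircT !bcircP. Qed.

End Alg4.
Section Alg5.
Variable R : realType.

Lemma comm_inv k (A B : 'M[R]_k) : B \in unitmx -> A *m B = B *m A ->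
  A *m invmx B = invmx B *m A.
Proof.
move=> uB AB.
by rewrite -[A *m invmx B](mulKmx uB) (mulmxA B A) -AB mulmxK.
Qed.

Lemma cayley_comm k (W : 'M[R]_k) (c : R) :
  (1%:M - c *: W) *m (1%:M + c *: W) = (1%:M + c *: W) *m (1%:M - c *: W).
Proof.
rewrite mulmxBl mulmxDl !mul1mx mulmxDr mulmxBr !mulmx1.
by rewrite opprD addrA addrK addrA subrK.
Qed.

Lemma cayley_orth k m (W : 'M[R]_k) (X : 'M[R]_(k, m)) :
  W^T = - W -> X^T *m X = 1%:M ->
  (invmx (1%:M - (1/2) *: W) *m (1%:M + (1/2) *: W) *m X)^T *m
  (invmx (1%:M - (1/2) *: W) *m (1%:M + (1/2) *: W) *m X) = 1%:M.
Proof.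
move=> skW XX.
set A := 1%:M - _; set B := 1%:M + _.
have uA : A \in unitmx by exact: skew_unit.
have AT : A^T = B by rewrite /A /B linearB /= trmx1 linearZ /= skW scalerN opprK.
have BT : B^T = A by rewrite -AT trmxK.
have uB : B \in unitmx by rewrite -AT unitmx_tr.
rewrite !trmx_mul BT trmx_inv AT.
have E : A *m invmx B = invmx B *m A by apply: comm_inv => //; rewrite cayley_comm.
rewrite !mulmxA -(mulmxA _ A) E mulmxA -(mulmxA _ A (invmx A)) (mulmxV uA) mulmx1.
by rewrite -(mulmxA _ (invmx B)) (mulVmx uB) mulmx1.
Qed.

Lemma U_unit n p l (X V : tensor R n p l) :
  bcirc (tsub tid (tscale (1/2) (Wten X V))) \in unitmx.
Proof. by rewrite bcircB bcirc1 bcircZ bcircW; apply: skew_unit; apply: Wm_skew. Qed.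

Lemma bcircRetr n p l (X V : tensor R n p l) :
  bcirc (Retr X V) = invmx (1%:M - (1/2) *: Wm (bcirc X) (bcirc V)) *m
     (1%:M + (1/2) *: Wm (bcirc X) (bcirc V)) *m bcirc X.
Proof.
rewrite /Retr !bcircM tinvE ?U_unit //.
by rewrite bcircB bcircD bcirc1 !bcircZ !bcircW.
Qed.

Lemma clause1 n p l (X V : tensor R n p l) :
  tinvertible (tsub tid (tscale (1/2) (Wten X V))).
Proof. exact/tinvertibleP/U_unit. Qed.

Lemma clause2 n p l (X V : tensor R n p l) : Stiefel X -> Stiefel (Retr X V).
Proof.
rewrite /Stiefel => sX; apply: bcirc_inj.
rewrite bcircM bcircT bcircRetr bcirc1 cayley_orth //; first exact: Wm_skew.
by rewrite -bcircT -bcircM sX bcirc1.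
Qed.

Lemma clause4 n p l (X : tensor R n p l) : Retr X tzero = X.
Proof.
apply: bcirc_inj; rewrite bcircRetr bcirc0.
have -> : Wm (bcirc X) 0 = 0 by rewrite /Wm trmx0 mulmx0 mul0mx mulmx0 mul0mx subr0.
by rewrite scaler0 subr0 addr0 invmx1 !mul1mx.
Qed.
End Alg5.
Section CkTheory.
Variable R : realType.
Context {V : normedModType R}.

Lemma Ck_le (W : normedModType R) k (f : V -> W) : Ck k.+1 f -> Ck k f.
Proof.
elim: k f => [|k IH] f /= [df Hf].
  by move=> x; apply: differentiable_continuous.
by split => // v; apply: IH.
Qed.

Lemma Ck_cst (W : normedModType R) k (c : W) : Ck k (fun _ : V => c).
Proof.
elim: k c => [|k IH] c /=; first by move=> x; apply: cst_continuous.
split => [x|v]; first exact: differentiable_cst.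
have -> : (fun x => 'D_v (fun _ : V => c) x) = (fun _ => 0 : W).
  by apply: funext => x; rewrite derive_cst.
exact: IH.
Qed.

Lemma Ck_add (W : normedModType R) k (f g : V -> W) :
  Ck k f -> Ck k g -> Ck k (fun x => f x + g x).
Proof.
elim: k f g => [|k IH] f g /=; first by move=> cf cg x; exact: (continuousD (cf x) (cg x)).
move=> [df Hf] [dg Hg]; split => [x|v]; first exact: differentiableD.
have -> : (fun x => 'D_v (fun x => f x + g x) x) = (fun x => 'D_v f x + 'D_v g x).
  apply: funext => x; rewrite (deriveD (diff_derivable (df x)) (diff_derivable (dg x))).
  by [].
exact: IH.
Qed.

Lemma Ck_opp (W : normedModType R) k (f : V -> W) :
  Ck k f -> Ck k (fun x => - f x).
Proof.
elim: k f => [|k IH] f /=; first by move=> cf x; exact: (continuousN (cf x)).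
move=> [df Hf]; split => [x|v]; first exact: differentiableN.
have -> : (fun x => 'D_v (fun x => - f x) x) = (fun x => - 'D_v f x).
  by apply: funext => x; rewrite (deriveN (diff_derivable (df x))).
exact: IH.
Qed.

Lemma Ck_sub (W : normedModType R) k (f g : V -> W) :
  Ck k f -> Ck k g -> Ck k (fun x => f x - g x).
Proof. by move=> cf cg; apply: Ck_add => //; apply: Ck_opp. Qed.

Lemma Ck_scalel (W : normedModType R) k (g : V -> R) (c : W) :
  Ck k g -> Ck k (fun x => g x *: c).
Proof.
elim: k g => [|k IH] g /=; first by move=> cg x; exact: (@continuousZr_tmp R W V g c x (cg x)).
move=> [dg Hg]; split => [x|v]; first exact: differentiableZl.
have -> : (fun x => 'D_v (fun x => g x *: c) x) = (fun x => 'D_v g x *: c).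
  apply: funext => x; rewrite deriveE; last exact: differentiableZl.
  by rewrite diffZl // -deriveE.
exact: IH.
Qed.

Lemma Ck_mul k (f g : V -> R) :
  Ck k f -> Ck k g -> Ck k (fun x => f x * g x).
Proof.
elim: k f g => [|k IH] f g /=; first by move=> cf cg x; exact: (continuousM (cf x) (cg x)).
move=> [df Hf] [dg Hg]; split => [x|v]; first exact: differentiableM.
have -> : (fun x => 'D_v (fun x => f x * g x) x) =
          (fun x => f x * 'D_v g x + g x * 'D_v f x).
  apply: funext => x.
  by rewrite (deriveM (diff_derivable (df x)) (diff_derivable (dg x))).
apply: Ck_add; apply: IH => //; apply: Ck_le; by split.
Qed.

Lemma Ck_inv k (f : V -> R) :
  (forall x, f x != 0) -> Ck k f -> Ck k (fun x => (f x)^-1).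
Proof.
move=> nz; elim: k f nz => [|k IH] f nz /=.
  by move=> cf x; exact: (continuousV (nz x) (cf x)).
move=> [df Hf]; split => [x|v]; first exact: differentiableV.
have -> : (fun x => 'D_v (fun x => (f x)^-1) x) =
          (fun x => - ((f x)^-1 * (f x)^-1) * 'D_v f x).
  apply: funext => x.
  rewrite (deriveV (nz x) (diff_derivable (df x))).
  by rewrite -exprVn expr2.
have cfk : Ck k f by apply: Ck_le; split.
apply: Ck_mul => //; apply: Ck_opp; apply: Ck_mul; exact: IH.
Qed.

Lemma Ck_sum (W : normedModType R) k (I : Type) (r : seq I) (P : pred I)
  (F : I -> V -> W) :
  (forall i, P i -> Ck k (F i)) -> Ck k (fun x => \sum_(i <- r | P i) F i x).
Proof.
move=> HF; elim: r => [|a r IH].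
  have -> : (fun x => \sum_(i <- [::] | P i) F i x) = (fun _ => 0 : W).
    by apply: funext => x; rewrite big_nil.
  exact: Ck_cst.
have -> : (fun x => \sum_(i <- a :: r | P i) F i x) =
   (fun x => (if P a then F a x else 0) + \sum_(i <- r | P i) F i x).
  by apply: funext => x; rewrite big_cons; case: (P a); rewrite ?add0r.
apply: Ck_add => //; case Pa: (P a); [exact: HF | exact: Ck_cst].
Qed.

Lemma Ck_prod k (I : Type) (r : seq I) (P : pred I) (F : I -> V -> R) :
  (forall i, P i -> Ck k (F i)) -> Ck k (fun x => \prod_(i <- r | P i) F i x).
Proof.
move=> HF; elim: r => [|a r IH].
  have -> : (fun x => \prod_(i <- [::] | P i) F i x) = (fun _ => 1 : R).
    by apply: funext => x; rewrite big_nil.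
  exact: Ck_cst.
have -> : (fun x => \prod_(i <- a :: r | P i) F i x) =
   (fun x => (if P a then F a x else 1) * \prod_(i <- r | P i) F i x).
  by apply: funext => x; rewrite big_cons; case: (P a); rewrite ?mul1r.
apply: Ck_mul => //; case Pa: (P a); [exact: HF | exact: Ck_cst].
Qed.

Lemma Ck_mx k m n (f : V -> 'M[R]_(m, n)) :
  (forall i j, Ck k (fun x => f x i j)) -> Ck k f.
Proof.
move=> Hf.
have -> : f = (fun x => \sum_(i < m) \sum_(j < n) f x i j *: delta_mx i j).
  by apply: funext => x; rewrite [LHS]matrix_sum_delta.
apply: Ck_sum => i _; apply: Ck_sum => j _; apply: Ck_scalel; exact: Hf.
Qed.

End CkTheory.
Section CkCoord.
Variable R : realType.

Lemma Ck_constder (V W : normedModType R) k (f : V -> W) :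
  continuous f -> (forall x, differentiable f x) ->
  (forall v, exists c, forall x, 'D_v f x = c) -> Ck k f.
Proof.
case: k => [|k] cf df dc //=; split => // v.
have [c Hc] := dc v.
have -> : (fun x => 'D_v f x) = (fun _ => c) by apply: funext.
exact: Ck_cst.
Qed.

Lemma Ck_coord k m n (i : 'I_m) (j : 'I_n) :
  Ck k (fun M : 'M[R]_(m, n) => M i j).
Proof.
apply: Ck_constder.
- exact: coord_continuous.
- move=> x; exact: differentiable_coord.
- move=> v; exists (v i j) => x.
  have := derive_mx (@derivable_id R _ x v).
  rewrite derive_id => /matrixP /(_ i j); rewrite mxE => <-.
  by [].
Qed.

Lemma Ck_idR k : Ck k (fun t : R => t).
Proof.
apply: Ck_constder.
- by move=> x.
- move=> x; apply/derivable1_diffP; exact: (@derivable_id R _ x 1).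
- move=> v; exists v => x; exact: derive_id.
Qed.
End CkCoord.
Section TSmooth.
Variable R : realType.
Context {V : normedModType R}.

Definition Sm (f : V -> R) := forall k, Ck k f.
Definition TS n p l (F : V -> tensor R n p l) :=
  forall i a b, Sm (fun x => F x i a b).
Definition MS m n (Q : V -> 'M[R]_(m, n)) := forall a b, Sm (fun x => Q x a b).

Lemma Sm_cst c : Sm (fun _ => c). Proof. move=> k; exact: Ck_cst. Qed.
Lemma Sm_add f g : Sm f -> Sm g -> Sm (fun x => f x + g x).
Proof. by move=> Hf Hg k; apply: Ck_add. Qed.
Lemma Sm_opp f : Sm f -> Sm (fun x => - f x).
Proof. by move=> Hf k; apply: Ck_opp. Qed.
Lemma Sm_mul f g : Sm f -> Sm g -> Sm (fun x => f x * g x).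
Proof. by move=> Hf Hg k; apply: Ck_mul. Qed.
Lemma Sm_inv f : (forall x, f x != 0) -> Sm f -> Sm (fun x => (f x)^-1).
Proof. by move=> nz Hf k; apply: Ck_inv. Qed.
Lemma Sm_sum (I : Type) (r : seq I) (P : pred I) (F : I -> V -> R) :
  (forall i, P i -> Sm (F i)) -> Sm (fun x => \sum_(i <- r | P i) F i x).
Proof. by move=> HF k; apply: Ck_sum => i Pi; apply: HF. Qed.
Lemma Sm_prod (I : Type) (r : seq I) (P : pred I) (F : I -> V -> R) :
  (forall i, P i -> Sm (F i)) -> Sm (fun x => \prod_(i <- r | P i) F i x).
Proof. by move=> HF k; apply: Ck_prod => i Pi; apply: HF. Qed.

Lemma Sm_ext f g : (forall x, f x = g x) -> Sm f -> Sm g.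
Proof. by move=> e; have -> : f = g by apply: funext. Qed.

Lemma MS_det m (Q : V -> 'M[R]_m) : MS Q -> Sm (fun x => \det (Q x)).
Proof.
move=> HQ; apply: Sm_sum => s _; apply: Sm_mul; first exact: Sm_cst.
by apply: Sm_prod => i _; apply: HQ.
Qed.

Lemma MS_inv m (Q : V -> 'M[R]_m) : MS Q -> (forall x, Q x \in unitmx) ->
  MS (fun x => invmx (Q x)).
Proof.
move=> HQ uQ a b.
apply: (@Sm_ext (fun x => (\det (Q x))^-1 *
   ((-1) ^+ (b + a) * \det (row' b (col' a (Q x)))))).
  by move=> x; rewrite /invmx uQ !mxE.
apply: Sm_mul.
  apply: Sm_inv; first by move=> x; rewrite -unitfE -unitmxE.
  exact: MS_det.
apply: Sm_mul; first exact: Sm_cst.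
apply: MS_det => c d; apply: (Sm_ext (f := fun x => Q x (lift b c) (lift a d))).
  by move=> x; rewrite !mxE.
exact: HQ.
Qed.

Lemma TS_cst n p l (A : tensor R n p l) : TS (fun _ => A).
Proof. move=> i a b; exact: Sm_cst. Qed.

Lemma TS_prod n p q l (F : V -> tensor R n p l) (G : V -> tensor R p q l) :
  TS F -> TS G -> TS (fun x => tprod (F x) (G x)).
Proof.
move=> HF HG i a b.
apply: (@Sm_ext (fun x => \sum_j \sum_c F x (ord_sub i j) a c * G x j c b)).
  by move=> x; rewrite /tprod summxE; apply: eq_bigr => j _; rewrite mxE.
apply: Sm_sum => j _; apply: Sm_sum => c _; apply: Sm_mul; [exact: HF|exact: HG].
Qed.

Lemma TS_tr n p l (F : V -> tensor R n p l) : TS F -> TS (fun x => ttr (F x)).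
Proof.
move=> HF i a b; apply: (Sm_ext (f := fun x => F x (ord_neg i) b a)).
  by move=> x; rewrite /ttr mxE.
exact: HF.
Qed.

Lemma TS_add n p l (F G : V -> tensor R n p l) :
  TS F -> TS G -> TS (fun x => tadd (F x) (G x)).
Proof.
move=> HF HG i a b; apply: (Sm_ext (f := fun x => F x i a b + G x i a b)).
  by move=> x; rewrite /tadd mxE.
by apply: Sm_add.
Qed.

Lemma TS_sub n p l (F G : V -> tensor R n p l) :
  TS F -> TS G -> TS (fun x => tsub (F x) (G x)).
Proof.
move=> HF HG i a b; apply: (Sm_ext (f := fun x => F x i a b + - G x i a b)).
  by move=> x; rewrite /tsub !mxE.
by apply: Sm_add => //; apply: Sm_opp.
Qed.

Lemma TS_scale n p l (g : V -> R) (F : V -> tensor R n p l) :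
  Sm g -> TS F -> TS (fun x => tscale (g x) (F x)).
Proof.
move=> Hg HF i a b; apply: (Sm_ext (f := fun x => g x * F x i a b)).
  by move=> x; rewrite /tscale mxE.
by apply: Sm_mul.
Qed.

Lemma MS_bcirc n p l (F : V -> tensor R n p l) : TS F -> MS (fun x => bcirc (F x)).
Proof.
move=> HF s t; rewrite /bcirc /mxblock.
apply: (Sm_ext (f := fun x => F x (ord_sub (tagnat.sig1 s) (tagnat.sig1 t))
   (tagnat.sig2 s) (tagnat.sig2 t))).
  by move=> x; rewrite mxE.
exact: HF.
Qed.

Lemma TS_inv n l (F : V -> tensor R n n l) : TS F ->
  (forall x, bcirc (F x) \in unitmx) -> TS (fun x => tinv (F x)).
Proof.
move=> HF uF i a b.
case: l F HF uF i => [|l] F HF uF i; first by case: i.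
have E : forall x, tinv (F x) i =
   @submxblock _ _ _ (fun _ : 'I_l.+1 => n) (fun _ : 'I_l.+1 => n)
     (invmx (bcirc (F x))) i ord0.
  move=> x; rewrite -tinvE // /bcirc mxblockK ord_sub0 //.
apply: (Sm_ext (f := fun x => (@submxblock _ _ _ (fun _ : 'I_l.+1 => n)
   (fun _ : 'I_l.+1 => n) (invmx (bcirc (F x))) i ord0) a b)).
  by move=> x; rewrite E.
rewrite /submxblock /mxsub.
apply: (Sm_ext (f := fun x => invmx (bcirc (F x)) (tagnat.Rank i a) (tagnat.Rank ord0 b))).
  by move=> x; rewrite mxE.
by apply: MS_inv => //; apply: MS_bcirc.
Qed.

Lemma TS_Retr n p l (FX FV : V -> tensor R n p l) :
  TS FX -> TS FV -> TS (fun x => Retr (FX x) (FV x)).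
Proof.
move=> HX HV.
have HP : TS (fun x => Pten (FX x)).
  apply: TS_sub; first exact: TS_cst.
  apply: TS_scale; first exact: Sm_cst.
  by apply: TS_prod => //; apply: TS_tr.
have HW : TS (fun x => Wten (FX x) (FV x)).
  apply: TS_sub; apply: TS_prod; try apply: TS_prod; try apply: TS_tr; by [].
rewrite /Retr; apply: TS_prod => //; apply: TS_prod.
  apply: TS_inv; last by move=> x; apply: U_unit.
  apply: TS_sub; first exact: TS_cst.
  by apply: TS_scale => //; apply: Sm_cst.
apply: TS_add; first exact: TS_cst.
by apply: TS_scale => //; apply: Sm_cst.
Qed.

End TSmooth.
Section Clause3.
Variable R : realType.

Lemma clause3 n p l : smooth (@Retr_coord R n p l).
Proof.
have HX : TS (fun M : 'M[R]_(l + l, n * p) => tuncoord (usubmx M) : tensor R n p l).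
  move=> i a b; apply: (Sm_ext (f := fun M : 'M[R]_(l + l, n * p) =>
     M (lshift l i) (mxvec_index a b))).
    by move=> M; rewrite /tuncoord !mxE.
  by move=> k; apply: Ck_coord.
have HV : TS (fun M : 'M[R]_(l + l, n * p) => tuncoord (dsubmx M) : tensor R n p l).
  move=> i a b; apply: (Sm_ext (f := fun M : 'M[R]_(l + l, n * p) =>
     M (rshift l i) (mxvec_index a b))).
    by move=> M; rewrite /tuncoord !mxE.
  by move=> k; apply: Ck_coord.
have H := TS_Retr HX HV.
move=> k; apply: Ck_mx => i j.
case/mxvec_indexP: j => a b.
apply: (Sm_ext _ (H i a b)) => M.
by rewrite /Retr_coord /tcoord mxE mxvecE.
Qed.
End Clause3.
Section DT.
Variable R : realType.
Context {V : normedModType R}.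

Definition TD n p l (F : V -> tensor R n p l) x v :=
  forall i a b, derivable (fun y => F y i a b) x v.
Definition DT n p l (F : V -> tensor R n p l) x v : tensor R n p l :=
  fun i => \matrix_(a, b) 'D_v (fun y => F y i a b) x.

Lemma der_ext (W : normedModType R) (f g : V -> W) x v :
  (forall y, f y = g y) -> derivable f x v -> derivable g x v /\ 'D_v g x = 'D_v f x.
Proof. by move=> e; have -> : f = g by apply: funext. Qed.

Lemma der_sum (I : Type) (r : seq I) (P : pred I) (F : I -> V -> R) x v :
  (forall i, derivable (F i) x v) ->
  derivable (fun y => \sum_(i <- r | P i) F i y) x v /\
  'D_v (fun y => \sum_(i <- r | P i) F i y) x = \sum_(i <- r | P i) 'D_v (F i) x.
Proof.
move=> HF; elim: r => [|a r [IH1 IH2]].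
  have [d e] := @der_ext _ (fun _ => 0 : R) (fun y => \sum_(i <- [::] | P i) F i y) x v
    (fun y => esym (big_nil _ _ _ _)) (derivable_cst _ _ _).
  by split => //; rewrite e big_nil derive_cst.
have E : forall y, (if P a then F a y else 0) + \sum_(i <- r | P i) F i y =
   \sum_(i <- a :: r | P i) F i y.
  by move=> y; rewrite big_cons; case: (P a); rewrite ?add0r.
have da : derivable (fun y => if P a then F a y else 0) x v.
  by case: (P a) => //; exact: derivable_cst.
have [d e] := der_ext E (derivableD da IH1).
split => //; rewrite e deriveD // IH2 big_cons.
by case: (P a) => //; rewrite derive_cst add0r.
Qed.

Lemma der_mul (f g : V -> R) x v : derivable f x v -> derivable g x v ->
  derivable (fun y => f y * g y) x v /\
  'D_v (fun y => f y * g y) x = f x * 'D_v g x + g x * 'D_v f x.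
Proof.
move=> df dg; split; first exact: (derivableM df dg).
exact: (deriveM df dg).
Qed.

Lemma DT_prod n p q l (F : V -> tensor R n p l) (G : V -> tensor R p q l) x v :
  TD F x v -> TD G x v ->
  TD (fun y => tprod (F y) (G y)) x v /\
  DT (fun y => tprod (F y) (G y)) x v =
    tadd (tprod (DT F x v) (G x)) (tprod (F x) (DT G x v)).
Proof.
move=> HF HG.
have E : forall i a b y, tprod (F y) (G y) i a b =
   \sum_j \sum_c F y (ord_sub i j) a c * G y j c b.
  by move=> i a b y; rewrite /tprod summxE; apply: eq_bigr => j _; rewrite mxE.
have D : forall i a b,
  derivable (fun y => \sum_j \sum_c F y (ord_sub i j) a c * G y j c b) x v /\
  'D_v (fun y => \sum_j \sum_c F y (ord_sub i j) a c * G y j c b) x =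
  \sum_j \sum_c (F x (ord_sub i j) a c * 'D_v (fun y => G y j c b) x +
                 G x j c b * 'D_v (fun y => F y (ord_sub i j) a c) x).
  move=> i a b.
  have Hin : forall j, derivable (fun y => \sum_c F y (ord_sub i j) a c * G y j c b) x v /\
     'D_v (fun y => \sum_c F y (ord_sub i j) a c * G y j c b) x =
     \sum_c (F x (ord_sub i j) a c * 'D_v (fun y => G y j c b) x +
                 G x j c b * 'D_v (fun y => F y (ord_sub i j) a c) x).
    move=> j; have [d1 e1] := der_sum (index_enum _) predT
      (fun c => (der_mul (HF (ord_sub i j) a c) (HG j c b)).1).
    split => //; rewrite e1; apply: eq_bigr => c _.
    by rewrite (der_mul (HF (ord_sub i j) a c) (HG j c b)).2.
  have [d2 e2] := der_sum (index_enum _) predT (fun j => (Hin j).1).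
  split => //; rewrite e2; apply: eq_bigr => j _; exact: (Hin j).2.
split.
  move=> i a b; exact: (der_ext (fun y => esym (E i a b y)) (D i a b).1).1.
apply: functional_extensionality_dep => i; apply/matrixP => a b.
rewrite /DT mxE (der_ext (fun y => esym (E i a b y)) (D i a b).1).2 (D i a b).2.
rewrite /tadd /tprod mxE !summxE -big_split /=; apply: eq_bigr => j _.
rewrite !mxE -big_split /=; apply: eq_bigr => c _.
by rewrite !mxE addrC mulrC [G x j c b * _]mulrC.
Qed.

Lemma DT_tr n p l (F : V -> tensor R n p l) x v : TD F x v ->
  TD (fun y => ttr (F y)) x v /\ DT (fun y => ttr (F y)) x v = ttr (DT F x v).
Proof.
move=> HF.
have E : forall i a b y, ttr (F y) i a b = F y (ord_neg i) b a.
  by move=> i a b y; rewrite /ttr mxE.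
split.
  move=> i a b; exact: (der_ext (fun y => esym (E i a b y)) (HF _ _ _)).1.
apply: functional_extensionality_dep => i; apply/matrixP => a b.
rewrite /DT /ttr !mxE (der_ext (fun y => esym (E i a b y)) (HF _ _ _)).2.
by [].
Qed.

Lemma DT_cst n p l (A : tensor R n p l) x v :
  TD (fun _ => A) x v /\ DT (fun _ => A) x v = tzero.
Proof.
split; first by move=> i a b; exact: derivable_cst.
apply: functional_extensionality_dep => i; apply/matrixP => a b.
by rewrite /DT /tzero !mxE derive_cst.
Qed.

Lemma DT_affine n p l (A B : tensor R n p l) (g : V -> R) x v :
  derivable g x v ->
  TD (fun y => tadd A (tscale (g y) B)) x v /\
  DT (fun y => tadd A (tscale (g y) B)) x v = tscale ('D_v g x) B.
Proof.
move=> dg.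
have E : forall i a b y, tadd A (tscale (g y) B) i a b = A i a b + g y * B i a b.
  by move=> i a b y; rewrite /tadd /tscale !mxE.
have D : forall i a b, derivable (fun y => A i a b + g y * B i a b) x v /\
   'D_v (fun y => A i a b + g y * B i a b) x = 'D_v g x * B i a b.
  move=> i a b.
  have dm := der_mul dg (derivable_cst (B i a b) x v).
  have dc := derivable_cst (A i a b) x v.
  split; first exact: (derivableD dc dm.1).
  rewrite (deriveD dc dm.1) dm.2 derive_cst add0r derive_cst mulr0 add0r mulrC.
  by [].
split.
  move=> i a b; exact: (der_ext (fun y => esym (E i a b y)) (D i a b).1).1.
apply: functional_extensionality_dep => i; apply/matrixP => a b.
rewrite /DT /tscale !mxE (der_ext (fun y => esym (E i a b y)) (D i a b).1).2.
exact: (D i a b).2.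
Qed.

Lemma tcoord_inj n p l (A B : tensor R n p l) : tcoord A = tcoord B -> A = B.
Proof.
move=> /matrixP H; apply: functional_extensionality_dep => i; apply/matrixP => a b.
by have := H i (mxvec_index a b); rewrite !mxE !mxvecE.
Qed.

Lemma tcoord_der n p l (F : V -> tensor R n p l) x v :
  TD F x v <-> derivable (fun y => tcoord (F y)) x v.
Proof.
split => [HF|].
  apply/derivable_mxP => i j; case/mxvec_indexP: j => a b.
  apply: (der_ext _ (HF i a b)).1 => y; by rewrite mxE mxvecE.
move/derivable_mxP => H i a b.
apply: (der_ext _ (H i (mxvec_index a b))).1 => y; by rewrite mxE mxvecE.
Qed.

Lemma tcoord_D n p l (F : V -> tensor R n p l) x v : TD F x v ->
  'D_v (fun y => tcoord (F y)) x = tcoord (DT F x v).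
Proof.
move=> HF; rewrite derive_mx; last exact/tcoord_der.
apply/matrixP => i j; case/mxvec_indexP: j => a b.
rewrite !mxE mxvecE mxE.
have -> // : (fun t : V => tcoord (F t) i (mxvec_index a b)) = (fun y : V => F y i a b).
by apply: funext => y; rewrite mxE mxvecE.
Qed.

End DT.
Section Final.
Variable R : realType.

Lemma WX_mx k m (X V : 'M[R]_(k, m)) : X^T *m X = 1%:M ->
  V^T *m X + X^T *m V = 0 -> Wm X V *m X = V.
Proof.
move=> XX VX.
have VX' : V^T *m X = - (X^T *m V) by apply/eqP; rewrite -addr_eq0 VX.
have PX : Pm X *m X = (1/2) *: X.
  rewrite /Pm mulmxBl mul1mx -scalemxAl -mulmxA XX mulmx1.
  by rewrite -{1}(scale1r X) -scalerBl {1}(splitr 1) addrK.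
rewrite /Wm mulmxBl -(mulmxA (Pm X *m V)) XX mulmx1 -(mulmxA (X *m V^T)) PX.
rewrite -scalemxAr -mulmxA VX' /Pm mulmxBl mul1mx -scalemxAl.
by rewrite mulmxN scalerN opprK mulmxA subrK.
Qed.

Lemma tangent_eq n p l (X V : tensor R n p l) : tangent X V ->
  tadd (tprod (ttr V) X) (tprod (ttr X) V) = tzero.
Proof.
move=> [g [Sg [g0 [dg Dg]]]].
have TDg : TD g 0 1 by apply/tcoord_der.
have DTg : DT g 0 1 = V by apply: tcoord_inj; rewrite -tcoord_D.
have [TDt DTt] := DT_tr TDg.
have [_ DTp] := DT_prod TDt TDg.
have Hc : (fun y : R => tprod (ttr (g y)) (g y)) = (fun _ => tid) by apply: funext.
rewrite Hc DTt DTg g0 in DTp.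
by rewrite -DTp (DT_cst _ _ _).2.
Qed.

Lemma WX_t n p l (X V : tensor R n p l) : Stiefel X ->
  tadd (tprod (ttr V) X) (tprod (ttr X) V) = tzero -> tprod (Wten X V) X = V.
Proof.
rewrite /Stiefel => sX tV; apply: bcirc_inj.
rewrite bcircM bcircW; apply: WX_mx.
  by rewrite -bcircT -bcircM sX bcirc1.
by rewrite -!bcircT -!bcircM -bcircD tV bcirc0.
Qed.

Lemma Wm_linZ k m (X V : 'M[R]_(k, m)) t : Wm X (t *: V) = t *: Wm X V.
Proof.
have tZ : (t *: V)^T = t *: V^T by apply/matrixP => i j; rewrite !mxE.
rewrite /Wm linearZ /= tZ -scalemxAl -scalemxAr -scalemxAl scalerBr.
by [].
Qed.

Lemma Retr_id n p l (X V : tensor R n p l) t :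
  tprod (tadd tid (tscale (t * (- (1/2))) (Wten X V))) (Retr X (tscale t V)) =
  tprod (tadd tid (tscale (t * (1/2)) (Wten X V))) X.
Proof.
apply: bcirc_inj; rewrite bcircM bcircRetr bcircM !bcircD bcirc1 !bcircZ bcircW.
rewrite !Wm_linZ !scalerA !(mulrC (1/2) t) mulrN scaleNr.
set W := Wm _ _.
have uA : (1%:M - (t * (1/2)) *: W) \in unitmx by apply: skew_unit; apply: Wm_skew.
by rewrite !mulmxA (mulmxV uA) mul1mx.
Qed.

Lemma der_lin (c : R) :
  derivable (fun t : R => t * c) 0 1 /\ 'D_1 (fun t : R => t * c) 0 = c.
Proof.
have [d e] := der_mul (@derivable_id R R 0 1) (@derivable_cst R R R c 0 1).
split => //; rewrite e derive_cst derive_id mulr0 add0r mulr1.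
by [].
Qed.

Lemma clause5 n p l (X V : tensor R n p l) : Stiefel X -> tangent X V ->
  is_derive (0 : R) (1 : R) (fun t => tcoord (Retr X (tscale t V))) (tcoord V).
Proof.
move=> sX tV.
pose F := fun t : R => Retr X (tscale t V).
have TSF : TS F.
  apply: TS_Retr; first exact: TS_cst.
  apply: TS_scale; last exact: TS_cst.
  move=> k; exact: Ck_idR.
have TDF : TD F 0 1.
  move=> i a b; have := TSF i a b 1%N => -[dF _]; exact: diff_derivable.
set W := Wten X V.
have [TDU DTU] := DT_affine tid W (der_lin (- (1/2))).1.
have [TDA DTA] := DT_affine tid W (der_lin (1/2)).1.
have [_ DTL] := DT_prod TDU TDF.
have [_ DTR] := DT_prod TDA (@DT_cst R R _ _ _ X 0 1).1.
have Hid : (fun y : R => tprod (tadd tid (tscale (y * - (1 / 2)) W)) (F y)) =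
           (fun y : R => tprod (tadd tid (tscale (y * (1 / 2)) W)) X).
  by apply: funext => y; rewrite /F Retr_id.
have E1 : DT (fun y : R => tprod (tadd tid (tscale (y * - (1 / 2)) W)) (F y)) 0 1 =
  DT (fun y : R => tprod (tadd tid (tscale (y * (1 / 2)) W)) X) 0 1 by rewrite Hid.
have {E1}DTL := eq_trans (esym DTL) (eq_trans E1 DTR).
rewrite DTU DTA (der_lin _).2 (der_lin _).2 (@DT_cst R R _ _ _ X 0 1).2 in DTL.
have F0 : F 0 = X.
  rewrite /F.
  have -> : tscale 0 V = tzero.
    by apply: functional_extensionality_dep => i; rewrite /tscale scale0r.
  exact: clause4.
rewrite F0 in DTL.
have DF : DT F 0 1 = V.
  rewrite -(WX_t sX (tangent_eq tV)) -/W.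
  clearbody W.
  apply: bcirc_inj; move/(congr1 (@bcirc R n p l)): DTL.
  rewrite !bcircD !bcircM !bcircD !bcircZ bcirc1 bcirc0 mul0r scale0r addr0.
  rewrite mulmx0 addr0 mul1mx -!scalemxAl => E.
  apply/eqP; rewrite -subr_eq0; apply/eqP.
  have -> : bcirc (DT F 0 1) = (1/2) *: (bcirc W *m bcirc X) - (- (1/2)) *: (bcirc W *m bcirc X).
    by rewrite -E addrC addKr.
  by rewrite -scalerBl opprK -splitr scale1r subrr.
apply: DeriveDef.
  exact/tcoord_der.
by rewrite tcoord_D // DF.
Qed.

End Final.
Theorem mainTheorem7 (R : realType) (n p l : nat) (hnp : (p <= n)%N) :
  (* well defined: I - W_V/2 is t-invertible *)
  (forall X V : tensor R n p l, Stiefel X -> tangent X V ->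
     tinvertible (tsub tid (tscale (1/2) (Wten X V)))) /\
  (* R maps TM into M *)
  (forall X V : tensor R n p l, Stiefel X -> tangent X V ->
     Stiefel (Retr X V)) /\
  (* smoothness: R is the restriction to TM of a smooth map on the ambient
     space of pairs (X, V) *)
  smooth (@Retr_coord R n p l) /\
  (* R_X(0_X) = X *)
  (forall X : tensor R n p l, Stiefel X -> Retr X tzero = X) /\
  (* D R_X(0_X) = id on T_X St *)
  (forall X V : tensor R n p l, Stiefel X -> tangent X V ->
     is_derive (0 : R) (1 : R) (fun t => tcoord (Retr X (tscale t V)))
               (tcoord V)).
Proof.
split; first by move=> X V _ _; apply: clause1.
split; first by move=> X V sX _; apply: clause2.
split; first exact: clause3.
split; first by move=> X _; apply: clause4.
by move=> X V sX tV; apply: clause5.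
Qed.
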